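(* Let $R$ be a right Noetherian ring, $\alpha$ an automorphism of $R$, $S=R[\theta;\alpha]$, and let $u$ be a central unit of $R$. (a) The lattice of $\alpha$-stable right ideals of $R$ is isomorphic to the lattice of right $S$-submodules of $S/(u-\theta)S$ (via $N\mapsto ((u-\theta)S+N)/(u-\theta)S$). (b) If moreover $R$ is commutative, then the right $S$-module $S/(u-\theta)S$ is simple if and only if $R$ is $\alpha$-simple. (c) If moreover $R$ is a commutative domain with no nonzero proper idempotent ideals (e.g. $R$ a commutative Noetherian domain), then $S/(u-\theta)S$ is an Artinian right $S$-module if and only if $R$ is $\alpha$-simple.
   Context: $R[\theta;\alpha]$ denotes the skew polynomial ring of polynomials $\sum r_i\theta^i$ ($r_i\in R$) with multiplication determined by $\theta r=\alpha(r)\theta$ for $r\in R$. A (right) ideal $I$ of $R$ is $\alpha$-stable if $\alpha(I)=I$. $R$ is $\alpha$-simple if $(0)$ and $R$ are its only $\alpha$-stable ideals. *)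

(* Defs.v *)
From HB Require Import structures.
From mathcomp Require Import all_boot all_order all_algebra.
Set Implicit Arguments. Unset Strict Implicit. Unset Printing Implicit Defensive.
Import GRing.Theory.
Local Open Scope ring_scope.

Definition psubset {T : Type} (A B : T -> Prop) := forall x, A x -> B x.
Definition peqset {T : Type} (A B : T -> Prop) := forall x, A x <-> B x.

Definition add_subgroup {V : zmodType} (I : V -> Prop) :=
  [/\ I 0, (forall x y, I x -> I y -> I (x + y)) & (forall x, I x -> I (- x))].

Definition right_ideal {R : nzRingType} (I : R -> Prop) :=
  add_subgroup I /\ (forall x r, I x -> I (x * r)).

Definition two_sided_ideal {R : nzRingType} (I : R -> Prop) :=
  right_ideal I /\ (forall r x, I x -> I (r * x)).

Definition right_noetherian (R : nzRingType) :=
  forall I : nat -> R -> Prop,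
    (forall n, right_ideal (I n)) ->
    (forall n, psubset (I n) (I n.+1)) ->
    exists m, forall n, (m <= n)%N -> peqset (I n) (I m).

Definition alpha_stable {R : nzRingType} (alpha : R -> R) (N : R -> Prop) :=
  forall y, (exists x, N x /\ alpha x = y) <-> N y.

Definition alpha_simple (R : nzRingType) (alpha : R -> R) :=
  forall I : R -> Prop, two_sided_ideal I -> alpha_stable alpha I ->
    peqset I (fun x => x = 0) \/ peqset I (fun _ => True).

Definition central {R : nzRingType} (u : R) := forall r : R, u * r = r * u.

Definition ideal_sq {R : nzRingType} (I : R -> Prop) (x : R) :=
  exists n (a b : 'I_n -> R),
    (forall i, I (a i) /\ I (b i)) /\ x = \sum_(i < n) a i * b i.

Definition no_nontrivial_idempotent_ideal (R : nzRingType) :=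
  forall I : R -> Prop, two_sided_ideal I -> peqset (ideal_sq I) I ->
    peqset I (fun x => x = 0) \/ peqset I (fun _ => True).

(* ---------- The skew polynomial ring S = R[theta; alpha] ----------
   Carrier: {poly R} (coefficient sequences; additive structure, 'X = theta,
   c%:P = the constant c).  Multiplication is the skew product determined by
   theta * r = alpha r * theta:
     (sum p_i theta^i)(sum q_j theta^j) = sum_k (sum_{i+j=k} p_i alpha^i(q_j)) theta^k *)
Definition skew_mul {R : nzRingType} (alpha : R -> R) (p q : {poly R}) : {poly R} :=
  \poly_(k < (size p + size q)%N)
     \sum_(i < k.+1) p`_i * iter i alpha q`_(k - i).

Definition skew_right_ideal {R : nzRingType} (alpha : R -> R) (P : {poly R} -> Prop) :=
  add_subgroup P /\ (forall p s, P p -> P (skew_mul alpha p s)).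

Definition uthetaS {R : nzRingType} (alpha : R -> R) (u : R) (p : {poly R}) :=
  exists q, p = skew_mul alpha (u%:P - 'X) q.

(* Right S-submodules of the quotient module S/(u-theta)S, each represented by
   its preimage in S (correspondence theorem): a right S-submodule of S
   containing (u - theta)S. *)
Definition quot_submodule {R : nzRingType} (alpha : R -> R) (u : R)
    (P : {poly R} -> Prop) :=
  skew_right_ideal alpha P /\ psubset (uthetaS alpha u) P.

(* The map N |-> ((u - theta)S + N)/(u - theta)S, given by its preimage *)
Definition Phi {R : nzRingType} (alpha : R -> R) (u : R) (N : R -> Prop)
    (p : {poly R}) :=
  exists k n, uthetaS alpha u k /\ N n /\ p = k + n%:P.

Definition quot_simple {R : nzRingType} (alpha : R -> R) (u : R) :=
  (exists p, ~ uthetaS alpha u p) /\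
  forall P, quot_submodule alpha u P ->
    peqset P (uthetaS alpha u) \/ peqset P (fun _ => True).

Definition quot_artinian {R : nzRingType} (alpha : R -> R) (u : R) :=
  forall P : nat -> {poly R} -> Prop,
    (forall n, quot_submodule alpha u (P n)) ->
    (forall n, psubset (P n.+1) (P n)) ->
    exists m, forall n, (m <= n)%N -> peqset (P n) (P m).

(* Main.v *)
Require Import Defs.
From HB Require Import structures.
From mathcomp Require Import all_boot all_order all_algebra.
From mathcomp Require Import zify.
From Stdlib Require Import Classical.
Import GRing.Theory.
Local Open Scope ring_scope.

Lemma sum_tail (R : nzRingType) (F : nat -> R) a M :
  (a <= M)%N -> (forall i, (a <= i)%N -> F i = 0) ->
  \sum_(i < M) F i = \sum_(i < a) F i.
Proof.
move=> hM hF; rewrite -(big_mkord xpredT F) -(big_mkord xpredT F) (@big_cat_nat _ _ _ a 0 M _ _ (leq0n a) hM) /=.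
rewrite [\sum_(a <= i < M) _]big1_seq ?addr0 // => i.
by rewrite mem_index_iota => /andP [_ /andP [hi _]]; exact: hF.
Qed.

Lemma iter_rmorph0 (R : nzRingType) (alpha : {rmorphism R -> R}) i :
  iter i alpha 0 = 0.
Proof. by elim: i => //= i ->; rewrite rmorph0. Qed.

Lemma coef_skew (R : nzRingType) (alpha : {rmorphism R -> R}) p q k :
  (skew_mul alpha p q)`_k = \sum_(i < k.+1) p`_i * iter i alpha q`_(k - i).
Proof.
rewrite coef_poly; case: ifP => // /negbT; rewrite -leqNgt => hk.
rewrite big1 // => i _.
case: (ltnP i (size p)) => hi; last by rewrite nth_default // mul0r.
rewrite [q`_(k - i)]nth_default ?iter_rmorph0 ?mulr0 //.
have := ltn_ord i; move: hi hk; change (size q <= k - i)%N with (size (polyseq q) <= k - i)%N; set a := size (polyseq q); set b := size (polyseq p); lia.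
Qed.

Lemma coef_cq (R : nzRingType) (alpha : {rmorphism R -> R}) u q k :
  (skew_mul alpha (u%:P - 'X) q)`_k =
  u * q`_k - (if k is k'.+1 then alpha q`_k' else 0).
Proof.
rewrite coef_skew big_ord_recl /= coefB coefC coefX /= subr0 subn0.
case: k => [|k]; first by rewrite big_ord0 addr0 subr0.
rewrite big_ord_recl /= coefB coefC coefX /= sub0r subSS subn0 mulN1r.
rewrite big1 ?addr0 // => i _.
by rewrite /bump /= coefB coefC coefX /= subr0 mul0r.
Qed.

Section GInv.
End GInv.

Lemma gD {R : nzRingType} {alpha : {rmorphism R -> R}} {g : R -> R}
  (aK : cancel alpha g) (gK : cancel g alpha) x y : g (x + y) = g x + g y.
Proof. by rewrite -{1}(gK x) -{1}(gK y) -rmorphD aK. Qed.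

Lemma gM {R : nzRingType} {alpha : {rmorphism R -> R}} {g : R -> R}
  (aK : cancel alpha g) (gK : cancel g alpha) x y : g (x * y) = g x * g y.
Proof. by rewrite -{1}(gK x) -{1}(gK y) -rmorphM aK. Qed.

Lemma g0 {R : nzRingType} {alpha : {rmorphism R -> R}} {g : R -> R}
  (aK : cancel alpha g) : g 0 = 0.
Proof. by rewrite -{1}(rmorph0 alpha) aK. Qed.

Lemma g1 {R : nzRingType} {alpha : {rmorphism R -> R}} {g : R -> R}
  (aK : cancel alpha g) : g 1 = 1.
Proof. by rewrite -{1}(rmorph1 alpha) aK. Qed.

Lemma gN {R : nzRingType} {alpha : {rmorphism R -> R}} {g : R -> R}
  (aK : cancel alpha g) (gK : cancel g alpha) x : g (- x) = - g x.
Proof. by rewrite -{1}(gK x) -rmorphN aK. Qed.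

Definition Tm {R : nzRingType} (g : R -> R) (u : R) (x : R) := u * g x.
Definition ev {R : nzRingType} (g : R -> R) (u : R) (p : {poly R}) :=
  \sum_(i < size p) iter i (Tm g u) p`_i.

Lemma iterT0 {R : nzRingType} {alpha : {rmorphism R -> R}} {g : R -> R}
  (aK : cancel alpha g) u i : iter i (Tm g u) 0 = 0.
Proof. by elim: i => //= i ->; rewrite /Tm (g0 aK) mulr0. Qed.

Lemma iterTD {R : nzRingType} {alpha : {rmorphism R -> R}} {g : R -> R}
  (aK : cancel alpha g) (gK : cancel g alpha) u i x y :
  iter i (Tm g u) (x + y) = iter i (Tm g u) x + iter i (Tm g u) y.
Proof. by elim: i => //= i ->; rewrite /Tm (gD aK gK) mulrDr. Qed.

Lemma iterTN {R : nzRingType} {alpha : {rmorphism R -> R}} {g : R -> R}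
  (aK : cancel alpha g) (gK : cancel g alpha) u i x :
  iter i (Tm g u) (- x) = - iter i (Tm g u) x.
Proof. by elim: i => //= i ->; rewrite /Tm (gN aK gK) mulrN. Qed.

Lemma iterT_sum {R : nzRingType} {alpha : {rmorphism R -> R}} {g : R -> R}
  (aK : cancel alpha g) (gK : cancel g alpha) u i n (F : 'I_n -> R) :
  iter i (Tm g u) (\sum_(j < n) F j) = \sum_(j < n) iter i (Tm g u) (F j).
Proof.
apply: (big_morph _ (iterTD aK gK u i) (iterT0 aK u i)).
Qed.

Lemma iterT_alpha {R : nzRingType} {alpha : {rmorphism R -> R}} {g : R -> R}
  (aK : cancel alpha g) (gK : cancel g alpha) u i x y :
  iter i (Tm g u) (x * iter i alpha y) = iter i (Tm g u) x * y.
Proof.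
elim: i x y => // i IH x y.
by rewrite [iter i.+1 alpha y]iterSr /= IH /Tm (gM aK gK) aK mulrA.
Qed.

Lemma ev_bound {R : nzRingType} {alpha : {rmorphism R -> R}} {g : R -> R}
  (aK : cancel alpha g) u (p : {poly R}) M : (size p <= M)%N ->
  ev g u p = \sum_(i < M) iter i (Tm g u) p`_i.
Proof.
move=> hM; rewrite /ev; symmetry; apply: (@sum_tail _ (fun i => iter i (Tm g u) p`_i) _ _ hM) => i hi.
by rewrite nth_default // (iterT0 aK).
Qed.

Lemma evD {R : nzRingType} {alpha : {rmorphism R -> R}} {g : R -> R}
  (aK : cancel alpha g) (gK : cancel g alpha) u (p q : {poly R}) :
  ev g u (p + q) = ev g u p + ev g u q.
Proof.
rewrite (ev_bound aK u _ _ (size_polyD p q)) (ev_bound aK u _ _ (leq_maxl (size p) (size q))).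
rewrite (ev_bound aK u _ _ (leq_maxr (size p) (size q))) -big_split.
by apply: eq_bigr => i _; rewrite coefD (iterTD aK gK).
Qed.

Lemma evN {R : nzRingType} {alpha : {rmorphism R -> R}} {g : R -> R}
  (aK : cancel alpha g) (gK : cancel g alpha) u (p : {poly R}) :
  ev g u (- p) = - ev g u p.
Proof.
rewrite /ev size_opp -sumrN; apply: eq_bigr => i _.
by rewrite coefN (iterTN aK gK).
Qed.

Lemma evC {R : nzRingType} {alpha : {rmorphism R -> R}} {g : R -> R}
  (aK : cancel alpha g) u (r : R) : ev g u r%:P = r.
Proof.
rewrite (@ev_bound _ _ _ aK u _ 1) ?size_polyC ?leq_b1 //.
by rewrite big_ord1 /= coefC.
Qed.

Lemma ev_mono {R : nzRingType} {alpha : {rmorphism R -> R}} {g : R -> R}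
  (aK : cancel alpha g) u (r : R) n : ev g u (r *: 'X^n) = iter n (Tm g u) r.
Proof.
rewrite (@ev_bound _ _ _ aK u _ n.+1); last first.
  by apply: (leq_trans (size_scale_leq r 'X^n)); rewrite size_polyXn.
rewrite big_ord_recr /= big1 ?add0r; first by rewrite coefZ coefXn eqxx mulr1.
move=> i _; rewrite coefZ coefXn.
by rewrite (_ : (i == n :> nat) = false) ?mulr0 ?(iterT0 aK) // ltn_eqF.
Qed.

Lemma triangle {R : nzRingType} (F : nat -> nat -> R) N :
  \sum_(k < N) \sum_(i < k.+1) F i (k - i)%N = \sum_(i < N) \sum_(j < (N - i)%N) F i j.
Proof.
elim: N => [|N IH]; first by rewrite !big_ord0.
rewrite big_ord_recr /= IH [in RHS]big_ord_recr /= subSnn big_ord1.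
rewrite [in RHS](eq_bigr (fun i : 'I_N => \sum_(j < (N - i)%N) F i j + F i (N - i)%N)); last first.
  by move=> i _; rewrite subSn ?(ltnW (ltn_ord i)) // big_ord_recr.
by rewrite big_split /= big_ord_recr /= subnn addrA.
Qed.

Lemma ev_mul {R : nzRingType} {alpha : {rmorphism R -> R}} {g : R -> R}
  (aK : cancel alpha g) (gK : cancel g alpha) u (p s : {poly R}) :
  ev g u (skew_mul alpha p s) =
  \sum_(j < size s) iter j (Tm g u) (ev g u p * s`_j).
Proof.
pose F := fun i j : nat => iter j (Tm g u) (iter i (Tm g u) p`_i * s`_j).
have hsz : (size (skew_mul alpha p s) <= size p + size s)%N by exact: size_poly.
rewrite (ev_bound aK u _ _ hsz).
rewrite (eq_bigr (fun k : 'I_(size p + size s) => \sum_(i < k.+1) F i (k - i)%N)); last first.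
  move=> k _; rewrite coef_skew (iterT_sum aK gK); apply: eq_bigr => i _.
  rewrite /F -(iterT_alpha aK gK u i) -iterD subnK //.
  by have := ltn_ord i; rewrite ltnS.
rewrite (triangle F).
rewrite [in RHS](eq_bigr (fun j : 'I_(size s) => \sum_(i < size p) F i j)); last first.
  by move=> j _; rewrite /ev mulr_suml (iterT_sum aK gK).
rewrite exchange_big /=.
rewrite (@sum_tail _ (fun i => \sum_(j < (size p + size s - i)%N) F i j) (size p)); last first.
- move=> i hi; apply: big1 => j _.
  by rewrite /F nth_default // (iterT0 aK) mul0r (iterT0 aK).
- exact: leq_addr.
apply: eq_bigr => i _; apply: (@sum_tail _ (F i)).
- have := ltn_ord i; set a := size s; set b := size p; lia.
- by move=> j hj; rewrite /F [s`_j]nth_default // mulr0 (iterT0 aK).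
Qed.

Lemma cq_D {R : nzRingType} (alpha : {rmorphism R -> R}) u q1 q2 :
  skew_mul alpha (u%:P - 'X) (q1 + q2) =
  skew_mul alpha (u%:P - 'X) q1 + skew_mul alpha (u%:P - 'X) q2.
Proof.
apply/polyP => k; rewrite coefD !coef_cq !coefD mulrDr.
case: k => [|k]; first by rewrite !subr0.
by rewrite coefD rmorphD opprD addrACA.
Qed.

Lemma cq_0 {R : nzRingType} (alpha : {rmorphism R -> R}) u :
  skew_mul alpha (u%:P - 'X) 0 = 0.
Proof.
apply/polyP => k; rewrite coef_cq !coef0 mulr0.
by case: k => [|k]; rewrite ?coef0 ?rmorph0 subr0.
Qed.

Lemma cq_X {R : nzRingType} (alpha : {rmorphism R -> R}) u q :
  skew_mul alpha (u%:P - 'X) q * 'X = skew_mul alpha (u%:P - 'X) (q * 'X).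
Proof.
apply/polyP => k; rewrite coefMX !coef_cq coefMX.
case: k => [|k] /=; first by rewrite mulr0 subr0.
by case: k => [|k] //=; rewrite coefMX /= ?rmorph0.
Qed.

Lemma cq_C {R : nzRingType} {alpha : {rmorphism R -> R}} {g : R -> R}
  (aK : cancel alpha g) (gK : cancel g alpha) u r :
  r%:P * 'X - (Tm g u r)%:P = skew_mul alpha (u%:P - 'X) (- g r)%:P.
Proof.
apply/polyP => k; rewrite coef_cq coefB coefMX !coefC.
case: k => [|k] /=; first by rewrite sub0r subr0 /Tm mulrN.
rewrite coefC subr0 mulr0 sub0r.
by case: k => [|k] //=; rewrite ?rmorphN ?gK ?opprK // rmorph0 oppr0.
Qed.

Lemma ev0 {R : nzRingType} (g : R -> R) u : ev g u 0 = 0.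
Proof. by rewrite /ev size_poly0 big_ord0. Qed.

Lemma ev_MX {R : nzRingType} {alpha : {rmorphism R -> R}} {g : R -> R}
  (aK : cancel alpha g) (gK : cancel g alpha) u p :
  ev g u (p * 'X) = Tm g u (ev g u p).
Proof.
rewrite (ev_bound aK u _ ((size p).+1)); last first.
  apply/leq_sizeP => i hi; rewrite coefMX; case: ifP => // _.
  by rewrite nth_default //; case: i hi => // i.
rewrite big_ord_recl /= coefMX eqxx add0r.
have := iterT_sum aK gK u 1 (size p) (fun i : 'I_(size p) => iter i (Tm g u) p`_i).
rewrite /= => ->; apply: eq_bigr => i _.
by rewrite coefMX /= add0n.
Qed.

Lemma ev_decomp {R : nzRingType} {alpha : {rmorphism R -> R}} {g : R -> R}
  (aK : cancel alpha g) (gK : cancel g alpha) u p :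
  exists q, p - (ev g u p)%:P = skew_mul alpha (u%:P - 'X) q.
Proof.
elim/poly_ind: p => [|p a [q hq]].
  by exists 0; rewrite ev0 subr0 cq_0.
exists (q * 'X + (- g (ev g u p))%:P).
rewrite cq_D -cq_X -hq -(cq_C aK gK) (evD aK gK) (ev_MX aK gK) (evC aK).
set r := ev g u p; set t := Tm g u r.
by rewrite mulrBl addrA subrK polyCD opprD addrA [_ - t%:P]addrAC addrK.
Qed.


Lemma ev_c {R : nzRingType} {alpha : {rmorphism R -> R}} {g : R -> R}
  (aK : cancel alpha g) (gK : cancel g alpha) u : ev g u (u%:P - 'X) = 0.
Proof.
have hX : ev g u 'X = u.
  by rewrite -['X]mul1r (ev_MX aK gK) -polyC1 (evC aK) /Tm (g1 aK) mulr1.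
by rewrite (evD aK gK) (evN aK gK) (evC aK) hX subrr.
Qed.

Lemma uS_ev {R : nzRingType} {alpha : {rmorphism R -> R}} {g : R -> R}
  (aK : cancel alpha g) (gK : cancel g alpha) u p :
  uthetaS alpha u p -> ev g u p = 0.
Proof.
move=> [q ->]; rewrite (ev_mul aK gK) big1 // => j _.
by rewrite (ev_c aK gK) mul0r (iterT0 aK).
Qed.

Lemma ev_uS {R : nzRingType} {alpha : {rmorphism R -> R}} {g : R -> R}
  (aK : cancel alpha g) (gK : cancel g alpha) u p :
  ev g u p = 0 -> uthetaS alpha u p.
Proof.
move=> h; have [q hq] := ev_decomp aK gK u p.
by exists q; rewrite -hq h subr0.
Qed.

Lemma PhiE {R : nzRingType} {alpha : {rmorphism R -> R}} {g : R -> R}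
  (aK : cancel alpha g) (gK : cancel g alpha) u (N : R -> Prop) p :
  Phi alpha u N p <-> N (ev g u p).
Proof.
split.
  by move=> [k [n [hk [hn ->]]]]; rewrite (evD aK gK) (evC aK) (uS_ev aK gK _ _ hk) add0r.
move=> hN; exists (p - (ev g u p)%:P), (ev g u p); split; last by rewrite subrK.
by apply: (ev_uS aK gK); rewrite (evD aK gK) (evN aK gK) (evC aK) subrr.
Qed.

Lemma ri_sum {R : nzRingType} (N : R -> Prop) n (F : 'I_n -> R) :
  right_ideal N -> (forall i, N (F i)) -> N (\sum_(i < n) F i).
Proof.
move=> [[h0 hD hN] _] hF.
by apply: (big_ind N h0 hD) => i _; exact: hF.
Qed.

Lemma stable_g {R : nzRingType} {alpha : {rmorphism R -> R}} {g : R -> R}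
  (aK : cancel alpha g) (N : R -> Prop) :
  alpha_stable alpha N -> forall x, N x -> N (g x).
Proof.
move=> hs x hx; have [y [hy <-]] := (hs x).2 hx; by rewrite aK.
Qed.

Lemma stable_T {R : nzRingType} {alpha : {rmorphism R -> R}} {g : R -> R}
  (aK : cancel alpha g) u (huc : central u) (N : R -> Prop) :
  right_ideal N -> alpha_stable alpha N -> forall i x, N x -> N (iter i (Tm g u) x).
Proof.
move=> hri hs; elim=> // i IH x hx /=.
rewrite /Tm huc; apply: hri.2; apply: (stable_g aK _ hs); exact: IH.
Qed.

Lemma partA1 {R : nzRingType} {alpha : {rmorphism R -> R}} {g : R -> R}
  (aK : cancel alpha g) (gK : cancel g alpha) u (huc : central u) (N : R -> Prop) :
  right_ideal N -> alpha_stable alpha N -> quot_submodule alpha u (Phi alpha u N).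
Proof.
move=> hri hs; have [[h0 hD hN] hM] := hri.
split; last by move=> p hp; apply/(PhiE aK gK); rewrite (uS_ev aK gK _ _ hp).
split.
  split.
  - by apply/(PhiE aK gK); rewrite ev0.
  - by move=> x y /(PhiE aK gK) hx /(PhiE aK gK) hy; apply/(PhiE aK gK); rewrite (evD aK gK); apply: hD.
  - by move=> x /(PhiE aK gK) hx; apply/(PhiE aK gK); rewrite (evN aK gK); apply: hN.
move=> p s /(PhiE aK gK) hp; apply/(PhiE aK gK); rewrite (ev_mul aK gK).
apply: ri_sum => // j; apply: (stable_T aK u huc _ hri hs); exact: hM.
Qed.

Lemma partA2 {R : nzRingType} {alpha : {rmorphism R -> R}} {g : R -> R}
  (aK : cancel alpha g) (gK : cancel g alpha) u (N1 N2 : R -> Prop) :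
  psubset (Phi alpha u N1) (Phi alpha u N2) <-> psubset N1 N2.
Proof.
split.
  move=> h x hx; have := h x%:P; rewrite !(PhiE aK gK) !(evC aK); exact.
by move=> h p; rewrite !(PhiE aK gK); exact: h.
Qed.

Lemma iter_cancel {R : nzRingType} {alpha : {rmorphism R -> R}} {g : R -> R}
  (aK : cancel alpha g) n x : iter n g (iter n alpha x) = x.
Proof. by elim: n x => // n IH x; rewrite iterSr [iter n.+1 alpha x]iterS /= aK IH. Qed.

Lemma iter_gD {R : nzRingType} {alpha : {rmorphism R -> R}} {g : R -> R}
  (aK : cancel alpha g) (gK : cancel g alpha) n x y :
  iter n g (x + y) = iter n g x + iter n g y.
Proof. by elim: n => //= n ->; rewrite (gD aK gK). Qed.

Lemma iter_gN {R : nzRingType} {alpha : {rmorphism R -> R}} {g : R -> R}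
  (aK : cancel alpha g) (gK : cancel g alpha) n x :
  iter n g (- x) = - iter n g x.
Proof. by elim: n => //= n ->; rewrite (gN aK gK). Qed.

Lemma iter_gM {R : nzRingType} {alpha : {rmorphism R -> R}} {g : R -> R}
  (aK : cancel alpha g) (gK : cancel g alpha) n x y :
  iter n g (x * y) = iter n g x * iter n g y.
Proof. by elim: n => //= n ->; rewrite (gM aK gK). Qed.

Lemma iter_g0 {R : nzRingType} {alpha : {rmorphism R -> R}} {g : R -> R}
  (aK : cancel alpha g) n : iter n g 0 = 0.
Proof. by elim: n => //= n ->; rewrite (g0 aK). Qed.

Lemma noeth_stable {R : nzRingType} {alpha : {rmorphism R -> R}} {g : R -> R}
  (aK : cancel alpha g) (gK : cancel g alpha) (hn : right_noetherian R)
  (N : R -> Prop) :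
  right_ideal N -> (forall x, N x -> N (g x)) -> forall x, N x -> N (alpha x).
Proof.
move=> [[h0 hD hN] hM] hg x hx.
pose I := fun n y => N (iter n g y).
have [m hm] : exists m, forall n, (m <= n)%N -> peqset (I n) (I m).
  apply: hn.
    move=> n; split; first split.
    - by rewrite /I (iter_g0 aK).
    - by move=> a b ha hb; rewrite /I (iter_gD aK gK); apply: hD.
    - by move=> a ha; rewrite /I (iter_gN aK gK); apply: hN.
    - by move=> a r ha; rewrite /I (iter_gM aK gK); apply: hM.
  by move=> n y hy; rewrite /I /=; apply: hg.
have := (hm m.+1 (leqnSn m) (iter m.+1 alpha x)).1.
rewrite /I (iter_cancel aK) iterSr (iter_cancel aK); exact.
Qed.

Lemma partA3 {R : nzRingType} {alpha : {rmorphism R -> R}} {g : R -> R}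
  (aK : cancel alpha g) (gK : cancel g alpha) (hn : right_noetherian R)
  u (hu : exists v : R, u * v = 1 /\ v * u = 1) (huc : central u)
  (P : {poly R} -> Prop) :
  quot_submodule alpha u P ->
  exists N, [/\ right_ideal N, alpha_stable alpha N & peqset (Phi alpha u N) P].
Proof.
move=> [[[h0 hD hN] hM] hsub].
have hev : forall p, P p <-> P (ev g u p)%:P.
  move=> p; have hk : P (p - (ev g u p)%:P).
    by apply: hsub; apply: (ev_uS aK gK); rewrite (evD aK gK) (evN aK gK) (evC aK) subrr.
  split => h.
    have -> : (ev g u p)%:P = p - (p - (ev g u p)%:P) by rewrite opprB addrC subrK.
    by apply: hD => //; apply: hN.
  have -> : p = (p - (ev g u p)%:P) + (ev g u p)%:P by rewrite subrK.
  by apply: hD.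
have hri : right_ideal (fun x => P x%:P).
  split; first split.
  - by rewrite polyC0.
  - by move=> x y hx hy; rewrite polyCD; apply: hD.
  - by move=> x hx; rewrite polyCN; apply: hN.
  move=> x r hx; have [->|nz] := eqVneq r 0; first by rewrite mulr0 polyC0.
  have := hM _ r%:P hx; rewrite hev (ev_mul aK gK) (evC aK) size_polyC nz big_ord1 /=.
  by rewrite coefC.
have hg : forall x, P x%:P -> P (g x)%:P.
  move=> x hx; have := hM _ 'X hx.
  rewrite hev (ev_mul aK gK) (evC aK) size_polyX big_ord_recl big_ord1 /= !coefX /= mulr0 add0r mulr1 => hT.
  have [v [huv hvu]] := hu.
  have := hri.2 _ v hT; rewrite /Tm huc -mulrA huv mulr1; exact.
exists (fun x => P x%:P); split => //.
  move=> y; split.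
    move=> [x [hx <-]]; exact: (noeth_stable aK gK hn _ hri hg).
  by move=> hy; exists (g y); split; [exact: hg | rewrite gK].
by move=> p; rewrite (PhiE aK gK) -hev.
Qed.

Lemma isq_sub {R : nzRingType} (J : R -> Prop) :
  two_sided_ideal J -> psubset (ideal_sq J) J.
Proof.
move=> hJ x [n [a [b [hab ->]]]]; apply: ri_sum; first exact: hJ.1.
by move=> i; apply: hJ.1.2; exact: (hab i).1.
Qed.

Lemma isq_ideal {R : nzRingType} (J : R -> Prop) :
  two_sided_ideal J -> two_sided_ideal (ideal_sq J).
Proof.
move=> [[[h0 hD hN] hM] hL].
split; first split; first split.
- by exists 0%N, (fun _ => 0), (fun _ => 0); split; [move=> i; split | rewrite big_ord0].
- move=> x y [n [a [b [hab ->]]]] [m [a' [b' [hab' ->]]]].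
  exists (n + m)%N, (fun i => match split i with inl j => a j | inr k => a' k end),
    (fun i => match split i with inl j => b j | inr k => b' k end); split.
    by move=> i; case: (split i) => j; [exact: hab | exact: hab'].
  rewrite big_split_ord; congr (_ + _); apply: eq_bigr => i _.
    by have -> : split (lshift m i) = inl i := unsplitK (inl i).
  by have -> : split (rshift n i) = inr i := unsplitK (inr i).
- move=> x [n [a [b [hab ->]]]].
  exists n, (fun i => - a i), b; split.
    by move=> i; split; [apply: hN; exact: (hab i).1 | exact: (hab i).2].
  by rewrite -sumrN; apply: eq_bigr => i _; rewrite mulNr.
- move=> x r [n [a [b [hab ->]]]].
  exists n, a, (fun i => b i * r); split.
    by move=> i; split; [exact: (hab i).1 | apply: hM; exact: (hab i).2].
  by rewrite mulr_suml; apply: eq_bigr => i _; rewrite mulrA.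
- move=> r x [n [a [b [hab ->]]]].
  exists n, (fun i => r * a i), b; split.
    by move=> i; split; [apply: hL; exact: (hab i).1 | exact: (hab i).2].
  by rewrite mulr_sumr; apply: eq_bigr => i _; rewrite mulrA.
Qed.

Lemma isq_stable {R : nzRingType} {alpha : {rmorphism R -> R}} {g : R -> R}
  (aK : cancel alpha g) (gK : cancel g alpha) (J : R -> Prop) :
  alpha_stable alpha J -> alpha_stable alpha (ideal_sq J).
Proof.
move=> hs y; split.
  move=> [x [[n [a [b [hab ->]]]] <-]].
  exists n, (fun i => alpha (a i)), (fun i => alpha (b i)); split.
    by move=> i; split; apply/(hs _).1; [exists (a i); split => //; exact: (hab i).1
                                      | exists (b i); split => //; exact: (hab i).2].
  by rewrite rmorph_sum; apply: eq_bigr => i _; rewrite rmorphM.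
move=> [n [a [b [hab ->]]]].
exists (\sum_(i < n) g (a i) * g (b i)); split.
  exists n, (fun i => g (a i)), (fun i => g (b i)); split => //.
  by move=> i; split; apply: (stable_g aK _ hs); [exact: (hab i).1 | exact: (hab i).2].
by rewrite rmorph_sum; apply: eq_bigr => i _; rewrite rmorphM !gK.
Qed.

Lemma isq_sq {R : nzRingType} (J : R -> Prop) y : J y -> ideal_sq J (y * y).
Proof.
move=> hy; exists 1%N, (fun _ => y), (fun _ => y); split => //.
by rewrite big_ord1.
Qed.

Theorem lemma2p4 (R : nzRingType) (alpha : {rmorphism R -> R})
    (halpha : bijective alpha) (hnoeth : right_noetherian R)
    (u : R) (hu : exists v : R, u * v = 1 /\ v * u = 1) (huc : central u) :
  (* (a) N |-> ((u-theta)S + N)/(u-theta)S is a lattice (order) isomorphism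
         from alpha-stable right ideals of R onto submodules of S/(u-theta)S *)
  [/\ forall N, right_ideal N -> alpha_stable alpha N ->
        quot_submodule alpha u (Phi alpha u N),
      forall N1 N2, right_ideal N1 -> alpha_stable alpha N1 ->
        right_ideal N2 -> alpha_stable alpha N2 ->
        (psubset (Phi alpha u N1) (Phi alpha u N2) <-> psubset N1 N2)
    & forall P, quot_submodule alpha u P ->
        exists N, [/\ right_ideal N, alpha_stable alpha N &
                      peqset (Phi alpha u N) P]] /\
  (* (b) *)
  ((forall x y : R, x * y = y * x) ->
     (quot_simple alpha u <-> alpha_simple alpha)) /\
  (* (c) *)
  ((forall x y : R, x * y = y * x) ->
   (forall x y : R, x * y = 0 -> x = 0 \/ y = 0) ->
   no_nontrivial_idempotent_ideal R ->
     (quot_artinian alpha u <-> alpha_simple alpha)).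
Proof.
case: halpha => g aK gK.
have hB : (forall x y : R, x * y = y * x) ->
    (quot_simple alpha u <-> alpha_simple alpha).
  move=> hcomm; split.
  - move=> [_ hs] I hI hst.
    have hI0 : I 0 by case: hI => [[[]]].
    case: (hs _ (partA1 aK gK u huc I hI.1 hst)) => h; [left|right] => x; split.
    + move=> hx; have := (h x%:P).1; rewrite (PhiE aK gK) (evC aK) => /(_ hx).
      by move/(uS_ev aK gK); rewrite (evC aK).
    + by move=> ->.
    + done.
    + by move=> _; have := (h x%:P).2 Logic.I; rewrite (PhiE aK gK) (evC aK).
  - move=> hsim; split.
      exists 1; move/(uS_ev aK gK); rewrite -polyC1 (evC aK) => h10.
      by move: (oner_neq0 R); rewrite h10 eqxx.
    move=> P hP; have [N [hN hs hE]] := partA3 aK gK hnoeth u hu huc P hP.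
    have hN2 : two_sided_ideal N by split => // r x hx; rewrite hcomm; exact: hN.2.
    case: (hsim N hN2 hs) => h; [left|right] => p;
      apply: (iff_trans (iff_sym (hE p))); apply: (iff_trans (PhiE aK gK u N p));
      apply: (iff_trans (h _)).
      by split; [exact: (ev_uS aK gK) | exact: (uS_ev aK gK)].
    by [].
split.
  split.
  - exact: (partA1 aK gK u huc).
  - by move=> N1 N2 _ _ _ _; exact: (partA2 aK gK u).
  - by move=> P hP; exact: (partA3 aK gK hnoeth u hu huc P hP).
split; first exact: hB.
move=> hcomm hdom hidem; split.
- move=> hart I hI hst.
  have hI0 : I 0 by case: hI => [[[]]].
  case: (classic (exists x, I x /\ x <> 0)) => [[x [hx nx]] | hno]; last first.
    left => y; split; last by move=> ->.
    by move=> hy; apply: NNPP => ny; apply: hno; exists y.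
  pose J := fun n => iter n (@ideal_sq R) I.
  have hJ : forall n, [/\ two_sided_ideal (J n), alpha_stable alpha (J n),
      psubset (J n) I & exists y, J n y /\ y <> 0].
    elim=> [|n [h1 h2 h3 [y [hy ny]]]]; first by split => //; exists x.
    split.
    + exact: isq_ideal.
    + exact: (isq_stable aK gK).
    + by move=> z hz; apply: h3; exact: (isq_sub _ h1 _ hz).
    + exists (y * y); split; first exact: isq_sq.
      by move/hdom => [].
  have hJ1 : forall n, two_sided_ideal (J n) by move=> n; case: (hJ n).
  have hJ2 : forall n, alpha_stable alpha (J n) by move=> n; case: (hJ n).
  have [m hm] := hart (fun n => Phi alpha u (J n))
    (fun n => partA1 aK gK u huc _ (hJ1 n).1 (hJ2 n))
    (fun n => (partA2 aK gK u _ _).2 (isq_sub _ (hJ1 n))).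
  have heq : peqset (ideal_sq (J m)) (J m).
    move=> z; split; first exact: (isq_sub _ (hJ1 m)).
    have hsub : psubset (Phi alpha u (J m)) (Phi alpha u (J m.+1)).
      by move=> p hp; exact: ((hm m.+1 (leqnSn m) p).2 hp).
    exact: ((partA2 aK gK u _ _).1 hsub z).
  case: (hidem (J m) (hJ1 m) heq) => h.
    by have [_ _ _ [y [hy ny]]] := hJ m; exfalso; apply: ny; exact: (h y).1.
  right => z; split => // _.
  have [_ _ h3 _] := hJ m.
  have h1 : I 1 by apply: h3; exact: (h 1).2 Logic.I.
  by rewrite -(mul1r z); apply: hI.1.2.
- move=> hsim P hP hdec.
  have [_ hs] := (hB hcomm).2 hsim.
  have hch : forall k m, psubset (P (k + m)%N) (P m).
    elim=> [|k IH] m z hz; first exact: hz.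
    apply: IH; exact: hdec _ _ hz.
  case: (classic (exists m, peqset (P m) (uthetaS alpha u))) => [[m hm]|hno].
    exists m => n hn z; split => hz.
      by rewrite -(subnK hn) in hz; exact: hch _ _ _ hz.
    by apply: (hP n).2; exact: (hm z).1.
  have hall : forall n z, P n z.
    move=> n z; case: (hs (P n) (hP n)) => h; last by apply/(h z).2.
    by exfalso; apply: hno; exists n.
  by exists 0%N => n _ z; split => _; apply: hall.
Qed.
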